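(* Consider a multi-unit auction with $2$ identical items and $2$ unknown single-minded bidders. Let $\mathcal M_1$ be the randomized mechanism that with probability $1/2$ runs a second-price (ascending) auction for the grand bundle of both items, and with probability $1/2$ allocates a single item to a uniformly random bidder and then runs a second-price (ascending) auction for the second item among both bidders. Then $\mathcal M_1$ achieves a $\frac{4}{3}$-approximation to the optimal social welfare: on every instance, its expected welfare under truthful play is at least $\frac{3}{4}\mathrm{OPT}$.
   Context: A single-minded bidder $i$ has private $x_i\ge0$ and demand $d_i\in\{1,2\}$ with $v_i(q)=x_i$ for $q\ge d_i$ and $0$ otherwise. In the auction for the second item, a bidder already holding one item bids her marginal value for the second item; the highest bidder wins. $\mathrm{OPT}$ is the maximum of $v_1(q_1)+v_2(q_2)$ over nonnegative integers with $q_1+q_2\le2$. *)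

(* Defs.v *)
From HB Require Import structures.
From mathcomp Require Import all_boot all_order all_algebra.
Set Implicit Arguments. Unset Strict Implicit. Unset Printing Implicit Defensive.
Import Order.TTheory GRing.Theory Num.Theory.
Local Open Scope ring_scope.

Section Auction.
Variable R : realFieldType.

Definition sm_val (x : R) (d : nat) (q : nat) : R := if (d <= q)%N then x else 0.

Definition OPT (v1 v2 : nat -> R) : R :=
  \big[Num.max/0]_(q1 < 3)
    \big[Num.max/0]_(q2 < 3 | (q1 + q2 <= 2)%N) (v1 q1 + v2 q2).

(* Second-price (ascending) auction for the grand bundle: each bidder bids
   her value for both items; the highest bidder wins (ties to bidder 1, which
   does not affect welfare). *)
Definition bundle_welfare (v1 v2 : nat -> R) : R :=
  if v2 2%N <= v1 2%N then v1 2%N else v2 2%N.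

(* Bidder with valuation vh already holds one item; the second item is
   auctioned among both bidders. The holder bids her marginal value
   vh 2 - vh 1, the other bidder bids her marginal value vo 1 - vo 0.
   Highest bidder wins (ties to the holder; welfare is the same either way). *)
Definition second_item_welfare (vh vo : nat -> R) : R :=
  if vo 1%N - vo 0%N <= vh 2%N - vh 1%N then vh 2%N + vo 0%N
  else vh 1%N + vo 1%N.

Definition M1_welfare (v1 v2 : nat -> R) : R :=
  2^-1 * bundle_welfare v1 v2
  + 2^-1 * (2^-1 * second_item_welfare v1 v2 + 2^-1 * second_item_welfare v2 v1).

End Auction.

(* Main.v *)
Require Import Defs.
From HB Require Import structures.
From mathcomp Require Import all_boot all_order all_algebra.
From mathcomp Require Import lra.
Import Order.TTheory GRing.Theory Num.Theory.
Local Open Scope ring_scope.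

Theorem claimB2 (R : realFieldType) (x1 x2 : R) (d1 d2 : nat) :
  0 <= x1 -> 0 <= x2 ->
  (d1 == 1)%N || (d1 == 2)%N -> (d2 == 1)%N || (d2 == 2)%N ->
  (3 / 4) * OPT (sm_val x1 d1) (sm_val x2 d2)
    <= M1_welfare (sm_val x1 d1) (sm_val x2 d2).
Proof.
move=> h1 h2 hd1 hd2.
have hmax : forall W a b : R, 3/4 * a <= W -> 3/4 * b <= W -> 3/4 * Num.max a b <= W.
  by move=> W a b ha hb; rewrite /Num.max; case: ifP => _ //.
move: hd1 hd2 => /orP[]/eqP-> /orP[]/eqP->.
all: rewrite /M1_welfare /bundle_welfare /second_item_welfare /sm_val /=.
all: rewrite ?subr0 ?addr0 ?add0r ?subrr.
all: set W := (X in _ <= X).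
all: have W0 : 0 <= W by rewrite /W; do 3? [case: ifP => ?]; lra.
all: apply: (big_ind (fun x => 3/4 * x <= W)); [by rewrite mulr0 | exact: hmax | ].
all: move=> [[|[|[|//]]] ?] _; (apply: (big_ind (fun x => 3/4 * x <= W)); [by rewrite mulr0 | exact: hmax | ]).
all: move=> [[|[|[|//]]] ?] //= _; rewrite /sm_val /= ?addr0 ?add0r ?mulr0 //.
all: rewrite /W; do 3? [case: ifP => ?]; lra.
Qed.
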